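(* Let $(\mathbf{L},\mathbf{R})\in\mathcal{P}_{\mathsf N}$ be centered (so both matrices have the same number $m$ of columns), and let $f:\{0,1\}^m\to\{0,1\}^m$. Then $f$ is a contraction map for $(\mathbf{L},\mathbf{R})$ if and only if $f$ is an inclusion dominance map for $(\mathbf{L},\mathbf{R})$. In particular, a centered pair admits a contraction map if and only if it admits an inclusion dominance map.
   Context: $\mathcal{P}_{\mathsf N}$ denotes the set of pairs $(\mathbf{L},\mathbf{R})$ of $(0,1)$-matrices, $\mathbf{L}$ of size $(\mathsf N+1)\times m_L$ and $\mathbf{R}$ of size $(\mathsf N+1)\times m_R$, such that some index $p\in[\mathsf N+1]$ has row $p$ of $\mathbf{L}$ and row $p$ of $\mathbf{R}$ both zero. $\mathbf{A}_{(i)}$ denotes the $i$-th row of $\mathbf{A}$; $e$ the all-ones row vector; $|v|=\sum_k|v_k|$; $|x-x'|$ the Hamming distance; for vectors, $v\le w$ means componentwise; $u^T$ is the transpose (column vector). The pair is balanced if $|\mathbf{L}_{(i)}|=|\mathbf{R}_{(i)}|$ for all $i$, and centered if it is balanced and for some $i$ we have $\mathbf{L}_{(i)}=e$ and $\mathbf{R}_{(i)}=e$. A contraction map is $f:\{0,1\}^{m_L}\to\{0,1\}^{m_R}$ with $f(\mathbf{L}_{(i)})=\mathbf{R}_{(i)}$ for all $i\in[\mathsf N+1]$ and $|x-x'|\ge|f(x)-f(x')|$ for all $x,x'$. A dominance map is $f:\{0,1\}^{m_L}\to\{0,1\}^{m_R}$ such that for all $u$, $|u|=|f(u)|$ and $\mathbf{L}u^T\le\mathbf{R}f(u)^T$.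 An inclusion dominance map is a dominance map $f$ such that $u'\le u$ implies $f(u')\le f(u)$. *)

(* Defs.v *)
(* (0,1)-matrices are boolean matrices 'M[bool]_(N.+1, m);
   vectors in {0,1}^m are boolean row vectors 'rV[bool]_m. *)
From mathcomp Require Import all_boot all_order all_algebra.
Set Implicit Arguments. Unset Strict Implicit. Unset Printing Implicit Defensive.

Definition wt (m : nat) (v : 'rV[bool]_m) : nat := #|[set k | v ord0 k]|.

Definition hdist (m : nat) (x x' : 'rV[bool]_m) : nat := #|[set k | x ord0 k != x' ord0 k]|.

Definition vle (m : nat) (u' u : 'rV[bool]_m) : Prop := forall k, u' ord0 k -> u ord0 k.

(* (A u^T)_i for a 0/1 matrix A and 0/1 vector u (integer matrix-vector product) *)
Definition mxv (n m : nat) (A : 'M[bool]_(n, m)) (u : 'rV[bool]_m) (i : 'I_n) : nat :=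
  #|[set k | A i k && u ord0 k]|.

Definition zero_row (m : nat) (v : 'rV[bool]_m) : Prop := forall k, v ord0 k = false.
Definition ones_row (m : nat) (v : 'rV[bool]_m) : Prop := forall k, v ord0 k = true.

Definition inP (N mL mR : nat) (L : 'M[bool]_(N.+1, mL)) (R : 'M[bool]_(N.+1, mR)) : Prop :=
  exists p : 'I_N.+1, zero_row (row p L) /\ zero_row (row p R).

Definition balanced (N mL mR : nat) (L : 'M[bool]_(N.+1, mL)) (R : 'M[bool]_(N.+1, mR)) : Prop :=
  forall i : 'I_N.+1, wt (row i L) = wt (row i R).

Definition centered (N mL mR : nat) (L : 'M[bool]_(N.+1, mL)) (R : 'M[bool]_(N.+1, mR)) : Prop :=
  balanced L R /\ exists i : 'I_N.+1, ones_row (row i L) /\ ones_row (row i R).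

Definition contraction_map (N mL mR : nat) (L : 'M[bool]_(N.+1, mL)) (R : 'M[bool]_(N.+1, mR))
  (f : 'rV[bool]_mL -> 'rV[bool]_mR) : Prop :=
  (forall i : 'I_N.+1, f (row i L) = row i R) /\
  (forall x x' : 'rV[bool]_mL, hdist (f x) (f x') <= hdist x x').

Definition dominance_map (N mL mR : nat) (L : 'M[bool]_(N.+1, mL)) (R : 'M[bool]_(N.+1, mR))
  (f : 'rV[bool]_mL -> 'rV[bool]_mR) : Prop :=
  forall u : 'rV[bool]_mL, wt u = wt (f u) /\ (forall i, mxv L u i <= mxv R (f u) i).

Definition inclusion_dominance_map (N mL mR : nat) (L : 'M[bool]_(N.+1, mL))
  (R : 'M[bool]_(N.+1, mR)) (f : 'rV[bool]_mL -> 'rV[bool]_mR) : Prop :=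
  dominance_map L R f /\ (forall u' u, vle u' u -> vle (f u') (f u)).

(* Main.v *)
Require Import Defs.
From mathcomp Require Import all_boot all_order all_algebra.
From mathcomp Require Import zify.
Set Implicit Arguments. Unset Strict Implicit.

Section Aux.
Variable m : nat.
Implicit Types x y z : 'rV[bool]_m.

Definition inter x y := #|[set k | x ord0 k && y ord0 k]|.

Lemma cardE' (P : pred 'I_m) : #|[set k | P k]| = \sum_k (P k : nat).
Proof.
rewrite -sum1_card big_mkcond /=; apply: eq_bigr => k _; by rewrite inE; case: (P k).
Qed.

Lemma hd_wt x y : hdist x y + 2 * inter x y = wt x + wt y.
Proof.
rewrite /hdist /inter /wt !cardE' big_distrr -!big_split /=; apply: eq_bigr => k _.
by case: (x ord0 k); case: (y ord0 k).
Qed.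

Lemma inter_le x y : inter x y <= wt x /\ inter x y <= wt y.
Proof.
rewrite /inter /wt !cardE'; split; apply: leq_sum => k _;
by case: (x ord0 k); case: (y ord0 k).
Qed.

Lemma interC x y : inter x y = inter y x.
Proof. rewrite /inter !cardE'; apply: eq_bigr => k _; by rewrite andbC. Qed.

Lemma hdistC x y : hdist x y = hdist y x.
Proof. rewrite /hdist !cardE'; apply: eq_bigr => k _; by rewrite eq_sym. Qed.

Lemma hd_tri x y z : hdist x z <= hdist x y + hdist y z.
Proof.
rewrite /hdist !cardE' -big_split; apply: leq_sum => k _ /=.
by case: (x ord0 k); case: (y ord0 k); case: (z ord0 k).
Qed.

Lemma wt_split x y : wt x = inter x y + #|[set k | x ord0 k && ~~ y ord0 k]|.
Proof.
rewrite /inter /wt !cardE' -big_split; apply: eq_bigr => k _ /=.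
by case: (x ord0 k); case: (y ord0 k).
Qed.

Lemma inter_vle x y : wt x <= inter x y -> vle x y.
Proof.
move=> H k xk; have := wt_split x y; move=> E.
have E0 : #|[set k | x ord0 k && ~~ y ord0 k]| = 0 by lia.
have := card0_eq E0 k; rewrite !inE xk /=; by case: (y ord0 k).
Qed.

Lemma vle_inter x y : vle x y -> inter x y = wt x.
Proof.
move=> H; rewrite /inter /wt; apply: eq_card => k; rewrite !inE.
by case E: (x ord0 k) => //=; rewrite (H k E).
Qed.

Lemma zero_hd x z : zero_row z -> hdist x z = wt x.
Proof.
move=> H; rewrite /hdist /wt; apply: eq_card => k; rewrite !inE H; by case: (x ord0 k).
Qed.

Lemma ones_hd x o : ones_row o -> hdist x o + wt x = m.
Proof.
move=> H; rewrite /hdist /wt !cardE' -big_split /=.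
transitivity (\sum_(k < m) 1); last by rewrite sum1_card card_ord.
apply: eq_bigr => k _; rewrite H; by case: (x ord0 k).
Qed.

Lemma vle_eq x y : vle x y -> vle y x -> x = y.
Proof.
move=> H1 H2; apply/rowP => k.
case E: (x ord0 k); first by rewrite (H1 k E).
by case E': (y ord0 k) => //; rewrite (H2 k E') in E.
Qed.

End Aux.

Lemma mxv_inter N m (L : 'M[bool]_(N.+1, m)) u i : mxv L u i = inter (row i L) u.
Proof. rewrite /mxv /inter; apply: eq_card => k; by rewrite !inE mxE. Qed.

Lemma wt_row_le m (x : 'rV[bool]_m) : wt x <= m.
Proof. by rewrite /wt; apply: leq_trans (max_card _) _; rewrite card_ord. Qed.

Theorem theorem2 (N m : nat) (L R : 'M[bool]_(N.+1, m)) :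
  inP L R -> centered L R ->
  (forall f : 'rV[bool]_m -> 'rV[bool]_m,
      contraction_map L R f <-> inclusion_dominance_map L R f) /\
  ((exists f, contraction_map L R f) <-> (exists f, inclusion_dominance_map L R f)).
Proof.
move=> [p [Lp Rp]] [Bal [i0 [Li0 Ri0]]].
have equiv : forall f : 'rV[bool]_m -> 'rV[bool]_m,
      contraction_map L R f <-> inclusion_dominance_map L R f.
  move=> f; split.
  - move=> [Hrow Hlip].
    have Hw : forall u, wt u = wt (f u).
      move=> u.
      have h1 := Hlip u (row p L); rewrite Hrow !zero_hd // in h1.
      have h2 := Hlip u (row i0 L); rewrite Hrow in h2.
      have := ones_hd u Li0; have := ones_hd (f u) Ri0; lia.
    split; first split; first exact: Hw.
    + move=> i; rewrite !mxv_inter.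
      have h := Hlip (row i L) u; rewrite Hrow in h.
      have := hd_wt (row i L) u; have := hd_wt (row i R) (f u).
      have := Bal i; have := Hw u; lia.
    + move=> u' u H; apply: inter_vle.
      have h := Hlip u' u.
      have := hd_wt u' u; have := hd_wt (f u') (f u); rewrite (vle_inter H).
      have := Hw u; have := Hw u'; lia.
  - move=> [Hd Hmon].
    have Hw : forall u, wt u = wt (f u) by move=> u; case: (Hd u).
    have Hmono : forall a b, vle a b -> hdist (f a) (f b) = wt b - wt a /\ wt a <= wt b.
      move=> a b H; have H' := Hmon _ _ H.
      have := hd_wt (f a) (f b); rewrite (vle_inter H').
      have := inter_le (f a) (f b); rewrite (vle_inter H').
      have := Hw a; have := Hw b; lia.
    split.
    + move=> i; case: (Hd (row i L)) => hw hd; have := hd i; rewrite !mxv_inter.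
      have e : inter (row i L) (row i L) = wt (row i L).
        by apply: vle_inter.
      rewrite e => h.
      have [l1 l2] := inter_le (row i R) (f (row i L)).
      have := Bal i; move=> bi.
      apply: vle_eq; apply: inter_vle.
      * rewrite interC; lia.
      * lia.
    + move=> x x'.
      pose z : 'rV[bool]_m := (\row_k (x ord0 k && x' ord0 k))%R.
      have zx : vle z x by move=> k; rewrite mxE => /andP[].
      have zx' : vle z x' by move=> k; rewrite mxE => /andP[].
      have [a1 a2] := Hmono _ _ zx; have [b1 b2] := Hmono _ _ zx'.
      have t := hd_tri (f x) (f z) (f x'); rewrite (hdistC (f x) (f z)) b1 a1 in t.
      have dz : hdist x x' = hdist z x + hdist z x'.
        rewrite /hdist !cardE' -big_split; apply: eq_bigr => k _ /=; rewrite mxE.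
        by case: (x ord0 k); case: (x' ord0 k).
      have := hd_wt z x; have := hd_wt z x'; rewrite !vle_inter //.
      lia.
split; first exact: equiv.
split; move=> [f Hf]; exists f; by apply/equiv.
Qed.
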